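(* Consider an interventional factor model (IFM) with factor structure $\{(S_k, F_k)\}_{k=1}^{l}$ over intervention variables $\sigma = (\sigma_1, \dots, \sigma_d)$, and suppose its $\sigma$-graph $\mathcal G_{\sigma}$ is decomposable. Let $\Sigma_{\mathrm{train}} \subseteq \Sigma$ satisfy the following. For every $k \in \{1, \dots, l\}$ and every assignment $v \in \prod_{i \in F_k} \{0, 1, \dots, \aleph_i - 1\}$, the regime $\sigma$ with $\sigma_{F_k} = v$ and $\sigma_i = 0$ for all $i \notin F_k$ belongs to $\Sigma_{\mathrm{train}}$. Then, for every $\sigma^\star \in \Sigma$, the distribution $p(\cdot\,; \sigma^\star)$ is identified from $\{p(\cdot\,; \sigma) : \sigma \in \Sigma_{\mathrm{train}}\}$.
   Context: **Regimes.** There are $d$ intervention variables $\sigma_1, \dots, \sigma_d$. These are non-random regime indicators. Each $\sigma_i$ takes values in $\{0, 1, \dots, \aleph_i - 1\}$, where $\aleph_i \ge 2$ and the value $0$ denotes the baseline, i.e. no intervention. The regime space is $\Sigma = \prod_{i=1}^d \{0, \dots, \aleph_i - 1\}$. For $A \subseteq [d] = \{1, \dots, d\}$, write $\sigma_A = (\sigma_i)_{i \in A}$. **The random system.** $X = (X_1, \dots, X_m)$ is a random vector with sample space $\mathcal X$. For $S \subseteq [m]$, write $x_S = (x_j)_{j \in S}$. **Interventional factor model (IFM).** An IFM with factor structure $\{(S_k, F_k)\}_{k=1}^l$, where $S_k \subseteq [m]$ and $F_k \subseteq [d]$, is a family of distributions $\{p(\cdot\,; \sigma) : \sigma \in \Sigma\}$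 on $\mathcal X$ whose densities (or probability mass functions) satisfy $$p(x; \sigma) = \frac{1}{Z(\sigma)} \prod_{k=1}^l f_k(x_{S_k}; \sigma_{F_k}).$$ Here each $f_k$ is a strictly positive function of $(x_{S_k}, \sigma_{F_k})$, and $Z(\sigma) \in (0, \infty)$ is the normalizing constant. **$\sigma$-graph.** The $\sigma$-graph $\mathcal G_\sigma$ is the undirected graph with vertex set $\{\sigma_1, \dots, \sigma_d\}$. It has an edge $\sigma_i - \sigma_j$ ($i \ne j$) if and only if $\{i, j\} \subseteq F_k$ for some $k$. **Decomposable graphs.** An undirected graph is decomposable if it is complete, or if its vertex set can be partitioned into $(A, B, C)$ with $A, B$ nonempty, $C$ a clique separating $A$ from $B$, and the induced subgraphs on $A \cup C$ and $B \cup C$ both decomposable. **Identification.** $p(\cdot\,; \sigma^\star)$ is identified from $\Sigma_{\mathrm{train}}$ if the following holds for any two IFMs $p, p'$ with the same factor structure: whenever $p(\cdot\,; \sigma) = p'(\cdot\,; \sigma)$ for all $\sigma \in \Sigma_{\mathrm{train}}$, then $p(\cdot\,; \sigma^\star) = p'(\cdot\,; \sigma^\star)$. *)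

(* Defs.v *)
From HB Require Import structures.
From mathcomp Require Import all_boot all_order all_algebra.
From mathcomp Require Import all_classical all_reals all_analysis.
Set Implicit Arguments. Unset Strict Implicit. Unset Printing Implicit Defensive.
Import Order.TTheory GRing.Theory Num.Theory.
Local Open Scope ring_scope.

Definition in_Sigma (d : nat) (aleph : 'I_d -> nat) (sigma : 'I_d -> nat) : Prop :=
  forall i, (sigma i < aleph i)%N.

Definition sigma_edge (d l : nat) (F : 'I_l -> {set 'I_d}) : rel 'I_d :=
  fun i j => (i != j) && [exists k, (i \in F k) && (j \in F k)].

Definition is_clique (d : nat) (e : rel 'I_d) (C : {set 'I_d}) : Prop :=
  forall i j, i \in C -> j \in C -> i != j -> e i j.

Definition separates (d : nat) (e : rel 'I_d) (V A B C : {set 'I_d}) : Prop :=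
  forall (a : 'I_d) (p : seq 'I_d),
    a \in A -> last a p \in B -> path e a p -> all (fun v => v \in V) (a :: p) ->
    has (fun v => v \in C) (a :: p).

Inductive decomposable (d : nat) (e : rel 'I_d) : {set 'I_d} -> Prop :=
| decomp_complete V : is_clique e V -> decomposable e V
| decomp_split (V A B C : {set 'I_d}) :
    A :|: B :|: C = V -> [disjoint A & B] -> [disjoint A & C] -> [disjoint B & C] ->
    A != finset.set0 -> B != finset.set0 -> is_clique e C -> separates e V A B C ->
    decomposable e (A :|: C) -> decomposable e (B :|: C) -> decomposable e V.

Section IFM.
Context (R : realType) (dT : measure_display) (T : measurableType dT).
Context (mu : {measure set T -> \bar R}).
Context (m d l : nat) (Y : 'I_m -> Type) (coord : forall j : 'I_m, T -> Y j).
Context (aleph : 'I_d -> nat) (S : 'I_l -> {set 'I_m}) (F : 'I_l -> {set 'I_d}).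

Definition ifm_prod (f : 'I_l -> T -> ('I_d -> nat) -> R) (x : T) (sigma : 'I_d -> nat) : R :=
  \prod_(k < l) f k x sigma.

Definition ifm_Z (f : 'I_l -> T -> ('I_d -> nat) -> R) (sigma : 'I_d -> nat) : \bar R :=
  (\int[mu]_x (ifm_prod f x sigma)%:E)%E.

Definition ifm_density (f : 'I_l -> T -> ('I_d -> nat) -> R) (sigma : 'I_d -> nat) (x : T) : R :=
  ifm_prod f x sigma / fine (ifm_Z f sigma).

Definition ifm_dist (f : 'I_l -> T -> ('I_d -> nat) -> R) (sigma : 'I_d -> nat) (A : set T) : \bar R :=
  (\int[mu]_(x in A) (ifm_density f sigma x)%:E)%E.

Definition is_IFM (f : 'I_l -> T -> ('I_d -> nat) -> R) : Prop :=
  (forall k x y sigma, in_Sigma aleph sigma ->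
     (forall j, j \in S k -> coord j x = coord j y) -> f k x sigma = f k y sigma) /\
  (forall k x sigma tau, in_Sigma aleph sigma -> in_Sigma aleph tau ->
     (forall i, i \in F k -> sigma i = tau i) -> f k x sigma = f k x tau) /\
  (forall k x sigma, in_Sigma aleph sigma -> 0 < f k x sigma) /\
  (forall k sigma, in_Sigma aleph sigma -> measurable_fun setT (fun x => f k x sigma)) /\
  (forall sigma, in_Sigma aleph sigma ->
     (0 < ifm_Z f sigma)%E /\ (ifm_Z f sigma < +oo)%E).

Definition identified (Strain : ('I_d -> nat) -> Prop) (sigma_star : 'I_d -> nat) : Prop :=
  forall f f' : 'I_l -> T -> ('I_d -> nat) -> R,
    is_IFM f -> is_IFM f' ->
    (forall sigma, Strain sigma -> forall A, measurable A -> ifm_dist f sigma A = ifm_dist f' sigma A) ->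
    forall A, measurable A -> ifm_dist f sigma_star A = ifm_dist f' sigma_star A.

End IFM.

(* Main.v *)
Require Import Defs.
From HB Require Import structures.
From mathcomp Require Import all_boot all_order all_algebra.
From mathcomp Require Import all_classical all_reals all_analysis.
From mathcomp Require Import measurable_realfun.
From mathcomp Require Import ring lra.

Import Order.TTheory GRing.Theory Num.Theory.
Local Open Scope ring_scope.

Section Comb.
Variables (d l : nat) (K : fieldType).

Lemma split_prod (P : pred 'I_l) (F : 'I_l -> {set 'I_d}) (h : 'I_l -> {set 'I_d} -> K) (i : 'I_d) (A B : {set 'I_d}) :
  (forall k C, h k C != 0) ->
  (forall k, i \notin F k -> h k A = h k B) ->
  \prod_(k | P k) h k A = \prod_(k | P k) h k B * \prod_(k | P k && (i \in F k)) (h k A / h k B).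
Proof.
move=> hnz hAB.
rewrite (bigID (fun k => i \in F k)) /= [X in _ = X * _](bigID (fun k => i \in F k)) /=.
have e1 : \prod_(k | P k && ~~ (i \in F k)) h k A = \prod_(k | P k && ~~ (i \in F k)) h k B.
  by apply: eq_bigr => k /andP[_ nk]; rewrite hAB.
have e2 : \prod_(k | P k && (i \in F k)) h k A = \prod_(k | P k && (i \in F k)) h k B * \prod_(k | P k && (i \in F k)) (h k A / h k B).
  by rewrite -big_split /=; apply: eq_bigr => k _; rewrite mulrC divfK.
by rewrite e1 e2 -!mulrA [X in _ * X]mulrC.
Qed.

Lemma setU1D1_inter (F : {set 'I_d}) (i : 'I_d) (C : {set 'I_d}) :
  i \notin F -> (i |: C) :&: F = (C :\ i) :&: F.
Proof.
move=> H; apply/setP => x; rewrite !inE; case: (eqVneq x i) => [->|] //=.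
by rewrite (negbTE H) ?andbF.
Qed.

Lemma mobius (n : nat) : forall (P : pred 'I_l) (F : 'I_l -> {set 'I_d}) (h : 'I_l -> {set 'I_d} -> K),
 (forall k C, h k C != 0) ->
 (forall k C C', C :&: F k = C' :&: F k -> h k C = h k C') ->
 (forall j (C : {set 'I_d}), P j -> C \subset F j -> \prod_(k | P k) h k C = 1) ->
 forall D : {set 'I_d}, (#|D| <= n)%N -> \prod_(k | P k) h k D = 1.
Proof.
elim: n => [|n IH] P F h hnz hinv hyp D hD.
  move: hD; rewrite leqn0 cards_eq0 => /eqP ->.
  case: (pickP P) => [j Pj|noP]; first by apply: (hyp j) => //; exact: finset.sub0set.
  by rewrite big_pred0.
case: (finset.set_0Vmem D) => [->|[i iD]].
  case: (pickP P) => [j Pj|noP]; first by apply: (hyp j) => //; exact: finset.sub0set.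
  by rewrite big_pred0.
pose h' k C := h k (i |: C) / h k (C :\ i).
have key : forall A, \prod_(k | P k) h k (i |: A) = \prod_(k | P k) h k (A :\ i) * \prod_(k | P k && (i \in F k)) h' k A.
  move=> A; apply: split_prod => // k nk; apply: hinv; exact: setU1D1_inter.
have IH' : \prod_(k | P k && (i \in F k)) h' k (D :\ i) = 1.
  apply: (IH _ (fun k => F k :\ i)).
  - by move=> k C; rewrite mulf_neq0 ?invr_eq0.
  - move=> k C C' HC; rewrite /h'; congr (_ / _); apply: hinv; apply/setP => x;
    move/setP: HC => /(_ x); rewrite !inE; case: (eqVneq x i) => //= _;
    by rewrite !andbT.
  - move=> j C /andP[Pj iFj] sC.
    have := key C; rewrite (hyp j (i |: C)) //; last first.
      apply/fintype.subsetP => x; rewrite !inE => /orP[/eqP->//|xC].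
      by move/fintype.subsetP: sC => /(_ x xC); rewrite !inE => /andP[].
    rewrite (hyp j (C :\ i)) //; first by rewrite mul1r => <-.
    apply/fintype.subsetP => x; rewrite !inE => /andP[xi xC].
    by move/fintype.subsetP: sC => /(_ x xC); rewrite !inE => /andP[].
  - by move: hD; rewrite (cardsD1 i D) iD.
have := key (D :\ i); rewrite IH' mulr1 finset.setD1K //.
have -> : (D :\ i) :\ i = D :\ i by apply/setP => x; rewrite !inE; case: (x == i).
move=> ->; apply: (IH P F) => //.
by move: hD; rewrite (cardsD1 i D) iD.
Qed.
End Comb.

Section Basic.
Context (R : realType) (dT : measure_display) (T : measurableType dT).
Context (mu : {measure set T -> \bar R}).
Context (m d l : nat) (Y : 'I_m -> Type) (coord : forall j : 'I_m, T -> Y j).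
Context (aleph : 'I_d -> nat) (S : 'I_l -> {set 'I_m}) (F : 'I_l -> {set 'I_d}).
Context (f : 'I_l -> T -> ('I_d -> nat) -> R) (Hf : is_IFM mu coord aleph S F f).

Lemma prod_gt0 sigma x : in_Sigma aleph sigma -> 0 < ifm_prod f x sigma.
Proof.
move=> Hs; rewrite /ifm_prod; apply: prodr_gt0 => k _.
by case: Hf => _ [_ [H _]]; apply: H.
Qed.

Lemma mprod sigma : in_Sigma aleph sigma -> measurable_fun setT (fun x => ifm_prod f x sigma).
Proof.
move=> Hs; rewrite /ifm_prod; apply: measurable_prod => k _.
by case: Hf => _ [_ [_ [H _]]]; apply: H.
Qed.

Lemma Zfin sigma : in_Sigma aleph sigma ->
  ifm_Z mu f sigma = (fine (ifm_Z mu f sigma))%:E /\ 0 < fine (ifm_Z mu f sigma).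
Proof.
move=> Hs; case: Hf => _ [_ [_ [_ H]]]; have [H1 H2] := H _ Hs.
split; last by apply: fine_gt0; rewrite H1 H2.
by rewrite fineK // ge0_fin_numE ?H2 // ltW.
Qed.

Lemma mdens sigma : in_Sigma aleph sigma ->
  measurable_fun setT (fun x => (ifm_density mu f sigma x)%:E).
Proof.
move=> Hs; apply/measurable_EFinP; rewrite /ifm_density.
apply: measurable_funM; first exact: mprod.
exact: measurable_cst.
Qed.

Lemma int_dens sigma : in_Sigma aleph sigma ->
  mu.-integrable setT (fun x => (ifm_density mu f sigma x)%:E).
Proof.
move=> Hs; apply/integrableP; split; first exact: mdens.
have [ZE Zpos] := Zfin sigma Hs.
rewrite (eq_integral (fun x => ((fine (ifm_Z mu f sigma))^-1%:E * (ifm_prod f x sigma)%:E)%E)); last first.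
  move=> x _; rewrite /ifm_density gee0_abs ?lee_fin; last first.
    by rewrite divr_ge0 // ltW // prod_gt0.
  by rewrite -EFinM mulrC.
rewrite ge0_integralZl_EFin //; last 3 first.
- by move=> x _; rewrite lee_fin ltW // prod_gt0.
- by apply/measurable_EFinP; exact: mprod.
- by rewrite invr_ge0 ltW.
by rewrite -/(ifm_Z mu f sigma) ZE -EFinM ltry.
Qed.

End Basic.
Arguments prod_gt0 {R dT T mu m d l Y coord aleph S F f} Hf {sigma} x.
Arguments mprod {R dT T mu m d l Y coord aleph S F f} Hf {sigma}.
Arguments Zfin {R dT T mu m d l Y coord aleph S F f} Hf {sigma}.
Arguments mdens {R dT T mu m d l Y coord aleph S F f} Hf {sigma}.
Arguments int_dens {R dT T mu m d l Y coord aleph S F f} Hf {sigma}.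

Lemma alg4 (K : realFieldType) (a b c d z z' : K) : 0 < a -> 0 < b -> 0 < c -> 0 < d -> 0 < z -> 0 < z' ->
  b / z = a / z' -> d / z = c / z' -> (a / b) / (c / d) = 1.
Proof.
move=> a0 b0 c0 d0 z0 z'0 h1 h2.
have ha : a = b / z * z' by rewrite h1 divfK // gt_eqF.
have hc : c = d / z * z' by rewrite h2 divfK // gt_eqF.
rewrite ha hc; field.
by rewrite !gt_eqF.
Qed.

Theorem theorem1 (R : realType) (dT : measure_display) (T : measurableType dT)
  (mu : {measure set T -> \bar R})
  (m d l : nat) (Y : 'I_m -> Type) (coord : forall j : 'I_m, T -> Y j)
  (aleph : 'I_d -> nat) (S : 'I_l -> {set 'I_m}) (F : 'I_l -> {set 'I_d})
  (Strain : ('I_d -> nat) -> Prop) :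
  (forall i, 2 <= aleph i)%N ->
  decomposable (sigma_edge F) [set: 'I_d] ->
  (forall sigma, Strain sigma -> in_Sigma aleph sigma) ->
  (forall (k : 'I_l) (v : 'I_d -> nat),
     (forall i, i \in F k -> v i < aleph i)%N ->
     Strain (fun i => if i \in F k then v i else 0%N)) ->
  forall sigma_star, in_Sigma aleph sigma_star ->
    identified mu coord aleph S F Strain sigma_star.
Proof.
move=> Hal _ Htrin Htr ss Hss f f' Hf Hf' Heq A mA.
pose tau (C : {set 'I_d}) := fun i => if i \in C then ss i else 0%N.
have tauS C : in_Sigma aleph (tau C).
  move=> i; rewrite /tau; case: ifP => _ //.
  by apply: leq_trans (Hal i).
pose good x := forall C : {set 'I_d}, (exists k, C \subset F k) ->
   ifm_density mu f (tau C) x = ifm_density mu f' (tau C) x.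
have aegood : {ae mu, forall x, good x}.
  apply: filter_forall => C.
  case: (pselect (exists k, C \subset F k)) => [[k Ck]|nC]; last first.
    by apply: aeW => x /nC.
  have Ht : Strain (tau C).
    have := Htr k (tau C) (fun i _ => tauS C i).
    congr Strain; apply: funext => i; rewrite /tau.
    case: ifP => // iF; case: ifP => // iC.
    by move/fintype.subsetP: Ck => /(_ i iC); rewrite iF.
  have := @integral_ae_eq _ _ _ mu setT measurableT
     (fun x => (ifm_density mu f' (tau C) x)%:E) (fun x => (ifm_density mu f (tau C) x)%:E)
     (int_dens Hf (tauS C)) (mdens Hf' (tauS C)) (fun E _ mE => Heq _ Ht E mE).
  by apply: filterS => x H _; apply: EFin_inj; apply: H.
have inv g : is_IFM mu coord aleph S F g -> forall k x (C C' : {set 'I_d}),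
    C :&: F k = C' :&: F k -> g k x (tau C) = g k x (tau C').
  case=> _ [Hg _] k x C C' HC; apply: Hg => // i iF.
  move/setP: HC => /(_ i); rewrite !inE iF !andbT /tau => ->.
  by [].
have pos g : is_IFM mu coord aleph S F g -> forall k x C, 0 < g k x (tau C).
  by case=> _ [_ [Hg _]] k x C; apply: Hg.
have ratio x y : good x -> good y ->
    ifm_prod f' x ss / ifm_prod f x ss = ifm_prod f' y ss / ifm_prod f y ss.
  move=> gx gy.
  pose h k C := (f' k x (tau C) / f k x (tau C)) / (f' k y (tau C) / f k y (tau C)).
  have key C : \prod_(k | predT k) h k C =
     (ifm_prod f' x (tau C) / ifm_prod f x (tau C)) / (ifm_prod f' y (tau C) / ifm_prod f y (tau C)).
    by rewrite /h /ifm_prod !prodf_div.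
  have H : \prod_(k | predT k) h k [set: 'I_d] = 1.
    apply: (@mobius d l R #|[set: 'I_d]| predT F h); last by [].
  - by move=> k C; rewrite gt_eqF // !divr_gt0 // ?pos.
  - by move=> k C C' HC; rewrite /h !(inv _ Hf k _ C C' HC) !(inv _ Hf' k _ C C' HC).
  - move=> j C _ sC; rewrite key.
    have hx := gx C (ex_intro _ j sC); have hy := gy C (ex_intro _ j sC).
    move: hx hy; rewrite /ifm_density => hx hy.
    have [_ Z0] := Zfin Hf (tauS C); have [_ Z'0] := Zfin Hf' (tauS C).
    apply: alg4 hx hy => //; first [apply: (prod_gt0 Hf') | apply: (prod_gt0 Hf)]; exact: tauS.
  have tauT : tau [set: 'I_d] = ss by apply: funext => i; rewrite /tau finset.in_setT.
  move: H; rewrite key tauT => H.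
  rewrite -[LHS](divfK (x := ifm_prod f' y ss / ifm_prod f y ss)) ?H ?mul1r //.
  by rewrite gt_eqF // divr_gt0 // ?(prod_gt0 Hf) ?(prod_gt0 Hf').
have [K [Kpos HK]] : exists K, 0 < K /\
    {ae mu, forall x, good x -> ifm_prod f' x ss = K * ifm_prod f x ss}.
  case: (pselect (exists y, good y)) => [[y gy]|ng].
    exists (ifm_prod f' y ss / ifm_prod f y ss); split.
      by rewrite divr_gt0 // ?(prod_gt0 Hf) ?(prod_gt0 Hf').
    apply: aeW => x gx; rewrite -(ratio x y gx gy) divfK //.
    by rewrite gt_eqF // (prod_gt0 Hf).
  by exists 1; split => //; apply: aeW => x gx; exfalso; apply: ng; exists x.
have aeP : {ae mu, forall x, ifm_prod f' x ss = K * ifm_prod f x ss}.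
  by apply: filterS2 aegood HK => x gx /(_ gx).
have ZK : ifm_Z mu f' ss = (K%:E * ifm_Z mu f ss)%E.
  rewrite /ifm_Z -ge0_integralZl_EFin //; last 3 first.
  - by move=> x _; rewrite lee_fin ltW // (prod_gt0 Hf).
  - by apply/measurable_EFinP; exact: (mprod Hf).
  - exact: ltW.
  under [X in _ = X]eq_integral do rewrite -EFinM.
  apply: ae_eq_integral => //.
  - by apply/measurable_EFinP; exact: (mprod Hf').
  - by apply/measurable_EFinP; apply: measurable_funM; [exact: measurable_cst | exact: (mprod Hf)].
  - by apply: filterS aeP => x -> _.
have aeD : {ae mu, forall x, ifm_density mu f' ss x = ifm_density mu f ss x}.
  apply: filterS aeP => x Px; rewrite /ifm_density Px ZK.
  have [ZE Z0] := Zfin Hf Hss.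
  rewrite ZE -EFinM /=; field.
  by rewrite !gt_eqF.
rewrite /ifm_dist; symmetry; apply: ae_eq_integral => //.
- by apply: measurable_funTS; exact: (mdens Hf').
- by apply: measurable_funTS; exact: (mdens Hf).
- by apply: filterS aeD => x -> _.
Qed.
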